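(* For all $n\ge1$, $$B_n(q)=\sum_{w\in S_n}(-1)^{\ell(w)}q^{\beta(w)}=\prod_{k=1}^{n-1}(1-q^k)^{n-k}.$$
   Context: For $w\in S_n$, $\ell(w)=\#\{(i,j): i<j,\ w(i)>w(j)\}$ is the inversion number. The bigrassmannian statistic of $w$ is $\beta(w)=\sum_{i,j=1}^n\min(i,j)-\sum_{i,j=1}^n\widetilde w(i,j)$, where $\widetilde w(i,j)=\#\{p\le i : w(p)\le j\}$ is the corner sum matrix of the permutation matrix of $w$; equivalently $\beta(w)=\sum_{i=1}^n\frac12(i-w(i))^2$. *)

(* Defs.v *)
From HB Require Import structures.
From mathcomp Require Import all_boot all_order all_algebra all_fingroup.
Set Implicit Arguments. Unset Strict Implicit. Unset Printing Implicit Defensive.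
Import GRing.Theory.

(* Permutations of 'I_n = {0,...,n-1}; position/value i (0-based) stands for
   i.+1 in the paper's 1-based convention. *)

Definition inv_num n (w : 'S_n) : nat :=
  #|[set p : 'I_n * 'I_n | (p.1 < p.2) && (w p.2 < w p.1)]|.

Definition corner_sum n (w : 'S_n) (i j : 'I_n) : nat :=
  #|[set p : 'I_n | (p <= i) && (w p <= j)]|.

Definition beta_stat n (w : 'S_n) : nat :=
  (\sum_(i < n) \sum_(j < n) minn i.+1 j.+1
   - \sum_(i < n) \sum_(j < n) corner_sum w i j)%N.

(* Main.v *)
Require Import Defs.
From HB Require Import structures.
From mathcomp Require Import all_boot all_order all_algebra all_fingroup.
From mathcomp Require Import zify.
Import GRing.Theory Num.Theory.
Set Implicit Arguments. Unset Strict Implicit.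
Definition dst (a b : nat) : nat := (a - b) + (b - a).

Lemma sym_sq n (h : 'I_n -> 'I_n -> nat) (hs : forall a b, h a b = h b a) :
  \prod_(p : 'I_n * 'I_n | p.1 != p.2) h p.1 p.2 =
  (\prod_(p : 'I_n * 'I_n | p.1 < p.2) h p.1 p.2) ^ 2.
Proof.
rewrite (bigID (fun p : 'I_n * 'I_n => p.1 < p.2)) /=.
have inj : injective (fun p : 'I_n * 'I_n => (p.2, p.1)) by move=> [a b] [c d] /= [-> ->].
rewrite [X in _ * X](reindex_inj inj) /=.
rewrite expnS expn1; congr (_ * _).
  by apply: eq_bigl => -[a b] /=; rewrite ltn_neqAle andb_idl // => /andP[].
apply: eq_big => -[a b] /=; last by rewrite hs.
rewrite -leqNgt; apply/idP/idP.
  by move=> /andP[ne le]; rewrite ltn_neqAle le andbT eq_sym.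
by move=> lt; rewrite ltnW // andbT neq_ltn lt orbT.
Qed.

Definition Gp n (w : 'S_n) : nat :=
  \prod_(p : 'I_n * 'I_n | p.1 < p.2) dst (w p.1) (w p.2).

Lemma Gp_id n (w : 'S_n) : Gp w = Gp (1%g : 'S_n).
Proof.
apply/eqP; rewrite -(eqn_exp2r _ _ (isT : 0 < 2)); apply/eqP.
rewrite /Gp -(@sym_sq _ (fun a b => dst (w a) (w b))); last by move=> a b; rewrite /dst addnC.
rewrite -(@sym_sq _ (fun a b => dst ((1%g : 'S_n) a) ((1%g : 'S_n) b))); last by move=> a b; rewrite /dst addnC.
have inj : injective (fun p : 'I_n * 'I_n => (w p.1, w p.2)).
  by move=> [a b] [c d] /= [/perm_inj -> /perm_inj ->].
rewrite [RHS](reindex_inj inj) /=.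
apply: eq_big => -[a b] /=; first by rewrite (inj_eq perm_inj).
by rewrite !perm1.
Qed.
Lemma cnt_le m n : \sum_(p < n) (p <= m : nat) = minn m.+1 n.
Proof.
elim: n => [|n IH]; first by rewrite big_ord0; lia.
rewrite big_ord_recr /= IH; case: leqP => h; lia.
Qed.

Lemma cnt_ge k n : \sum_(i < n) (k <= i : nat) = n - k.
Proof.
elim: n => [|n IH]; first by rewrite big_ord0.
rewrite big_ord_recr /= IH; case: leqP => h; lia.
Qed.

Lemma triple_sum n (f g : 'I_n -> nat) :
  \sum_(i < n) \sum_(j < n) \sum_(p < n) ((f p <= i) && (g p <= j) : nat)
  = \sum_(p < n) (n - f p) * (n - g p).
Proof.
under eq_bigr do rewrite exchange_big.
rewrite exchange_big; apply: eq_bigr => p _.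
rewrite -cnt_ge -cnt_ge big_distrl /=; apply: eq_bigr => i _.
rewrite big_distrr /=; apply: eq_bigr => j _.
by case: (f p <= i); case: (g p <= j).
Qed.

Lemma corner_sumE n (w : 'S_n) i j :
  corner_sum w i j = \sum_(p < n) ((p <= i) && (w p <= j) : nat).
Proof.
rewrite /corner_sum cardsE -sum1_card big_mkcond; apply: eq_bigr => p _.
by rewrite unfold_in /=; case: (_ && _).
Qed.

Lemma minE n (i j : 'I_n) :
  minn i.+1 j.+1 = \sum_(p < n) ((p <= i) && (p <= j) : nat).
Proof.
under eq_bigr do rewrite -leq_min.
rewrite cnt_le; have := ltn_ord i; have := ltn_ord j; lia.
Qed.

Lemma corner_le n (w : 'S_n) i j : corner_sum w i j <= minn i.+1 j.+1.
Proof.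
rewrite corner_sumE leq_min; apply/andP; split.
  apply: (@leq_trans (\sum_(p < n) (p <= i : nat))).
    by apply: leq_sum => p _; case: (p <= i)%N; case: (w p <= j)%N.
  rewrite cnt_le; lia.
apply: (@leq_trans (\sum_(p < n) (w p <= j : nat))).
  by apply: leq_sum => p _; case: (p <= i)%N; case: (w p <= j)%N.
have -> : \sum_(p < n) (w p <= j : nat) = \sum_(p < n) (p <= j : nat).
  by rewrite [RHS](reindex_inj (@perm_inj _ w)).
rewrite cnt_le; lia.
Qed.

Lemma beta_eq n (w : 'S_n) :
  beta_stat w + \sum_(p < n) p * (n - p) = \sum_(p < n) (n - p) * w p.
Proof.
have S1 : \sum_(i < n) \sum_(j < n) minn i.+1 j.+1 = \sum_(p < n) (n - p) * (n - p).
  under eq_bigr do under eq_bigr do rewrite minE.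
  exact: (triple_sum (fun p => p) (fun p => p)).
have S2 : \sum_(i < n) \sum_(j < n) corner_sum w i j = \sum_(p < n) (n - p) * (n - w p).
  under eq_bigr do under eq_bigr do rewrite corner_sumE.
  exact: (triple_sum (fun p => p) (fun p => w p)).
have le : \sum_(i < n) \sum_(j < n) corner_sum w i j <= \sum_(i < n) \sum_(j < n) minn i.+1 j.+1.
  by apply: leq_sum => i _; apply: leq_sum => j _; apply: corner_le.
have E1 : \sum_(p < n) (n - p) * (n - p) + \sum_(p < n) p * (n - p) = \sum_(p < n) n * (n - p).
  rewrite -big_split /=; apply: eq_bigr => p _; have := ltn_ord p; nia.
have E2 : \sum_(p < n) (n - p) * (n - w p) + \sum_(p < n) (n - p) * w p = \sum_(p < n) n * (n - p).
  rewrite -big_split /=; apply: eq_bigr => p _; have := ltn_ord (w p); nia.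
rewrite /beta_stat; move: le E1 E2; rewrite S1 S2; lia.
Qed.
Local Open Scope ring_scope.
Lemma factor_sign (a b : nat) :
  (b%:R - a%:R : int) = (-1) ^+ (b < a)%N * (dst a b)%:R.
Proof.
rewrite /dst; case: ltnP => h.
  have -> : (b - a)%N = 0%N by apply/eqP; rewrite subn_eq0 ltnW.
  by rewrite addn0 natrB ?(ltnW h) // expr1 mulN1r opprB.
have -> : (a - b)%N = 0%N by apply/eqP; rewrite subn_eq0.
by rewrite add0n natrB // expr0 mul1r.
Qed.

Lemma count_inv n (w : 'S_n) :
  (\sum_(p : 'I_n * 'I_n | (p.1 < p.2)%N) (w p.2 < w p.1)%N)%N = inv_num w.
Proof.
rewrite /inv_num cardsE -sum1_card [RHS]big_mkcond [LHS]big_mkcond.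
by apply: eq_bigr => -[a b] _ /=; rewrite unfold_in /=; case: (a < b)%N; case: (w b < w a)%N.
Qed.

Lemma prod_sign n (w : 'S_n) :
  \prod_(i < n) \prod_(j < n | (i < j)%N) ((w j : nat)%:R - (w i : nat)%:R : int)
  = (-1) ^+ inv_num w * (Gp w)%:R.
Proof.
rewrite pair_big_dep /=.
under eq_bigr => p _ do rewrite factor_sign.
rewrite big_split /= prodrXr -natr_prod -count_inv.
by [].
Qed.

Lemma inv_num1 n : inv_num (1%g : 'S_n) = 0%N.
Proof.
rewrite /inv_num; apply/eqP; rewrite cards_eq0; apply/eqP/setP => -[a b].
rewrite !inE !perm1 /=; apply/negbTE; apply/negP => /andP[h1 h2].
by have := ltn_trans h1 h2; rewrite ltnn.
Qed.

Lemma Gp_gt0 n (w : 'S_n) : (0 < Gp w)%N.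
Proof.
rewrite /Gp; apply: (big_ind (fun x => 0 < x)%N) => //.
  by move=> x y hx hy; rewrite muln_gt0 hx hy.
move=> [a b] /= hab; rewrite /dst.
have h : (w a : nat) != (w b : nat).
  by rewrite (inj_eq val_inj) (inj_eq perm_inj) neq_ltn hab.
lia.
Qed.

Definition rw n (w : 'S_n) : 'rV[int]_n := \row_j ((w j : nat)%:R).

Lemma sign_inv n (w : 'S_n) : ((-1) ^+ inv_num w : int) = (-1) ^+ odd_perm w.
Proof.
have hV : Vandermonde n (rw w) = col_perm w (Vandermonde n (rw 1%g)).
  by apply/matrixP => i j; rewrite !mxE perm1.
have := congr1 determinant hV.
rewrite col_permE det_mulmx det_perm odd_permV !det_Vandermonde.
rewrite /rw.
under eq_bigr do under eq_bigr do rewrite !mxE.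
under [X in _ = X * _]eq_bigr do under eq_bigr do rewrite !mxE.
rewrite !prod_sign inv_num1 expr0 mul1r (Gp_id w) mulrC => h.
apply: (mulfI _ h); by rewrite pnatr_eq0 -lt0n Gp_gt0.
Qed.
Section Tri.
Variables (R : comPzRingType) (F : nat -> R).

Definition cc (i j : nat) : R := if (i < j)%N then F (j - i) else 1.

Lemma Q_step n :
  \prod_(0 <= i < n.+1) \prod_(0 <= j < n.+1) cc i j =
  (\prod_(0 <= i < n) \prod_(0 <= j < n) cc i j) * \prod_(0 <= i < n) F (n - i).
Proof.
rewrite [LHS]big_nat_recr //=.
rewrite [X in _ * X]big1_seq ?mulr1; last first.
  move=> j /andP[_]; rewrite mem_index_iota => /andP[_ hj].
  by rewrite /cc ltnNge -ltnS hj.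
under eq_bigr do rewrite big_nat_recr //=.
rewrite big_split /=; congr (_ * _).
by apply: eq_big_nat => i /andP[_ hi]; rewrite /cc hi.
Qed.

Lemma R_step n :
  \prod_(1 <= k < n.+1) F k ^+ (n.+1 - k) =
  (\prod_(1 <= k < n) F k ^+ (n - k)) * \prod_(0 <= i < n) F (n - i).
Proof.
have -> : \prod_(0 <= i < n) F (n - i) = \prod_(1 <= k < n.+1) F k.
  rewrite big_nat_rev big_add1 /=; apply: eq_big_nat => i /andP[_ hi].
  by congr F; lia.
have -> : \prod_(1 <= k < n) F k ^+ (n - k) = \prod_(1 <= k < n.+1) F k ^+ (n - k).
  case: n => [|m]; first by rewrite !big_geq.
  by rewrite [RHS]big_nat_recr //= subnn expr0 mulr1.
rewrite -big_split /=; apply: eq_big_nat => k /andP[_ hk].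
by rewrite -exprSr; congr (_ ^+ _); lia.
Qed.

Lemma triangle n :
  \prod_(i < n) \prod_(j < n | (i < j)%N) F (j - i) = \prod_(1 <= k < n) F k ^+ (n - k).
Proof.
have -> : \prod_(i < n) \prod_(j < n | (i < j)%N) F (j - i) =
          \prod_(0 <= i < n) \prod_(0 <= j < n) cc i j.
  rewrite big_mkord; apply: eq_bigr => i _.
  by rewrite big_mkord big_mkcond.
elim: n => [|n IH]; first by rewrite !big_geq.
by rewrite Q_step R_step IH.
Qed.
End Tri.
Lemma cnt_lt j n : (\sum_(i < n) (i < j : nat))%N = minn j n.
Proof.
elim: n => [|n IH]; first by rewrite big_ord0; lia.
rewrite big_ord_recr /= IH; case: ltnP => h; lia.
Qed.

Theorem theorem5p3 (n : nat) (hn : (1 <= n)%N) :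
  \sum_(w : 'S_n) (-1) ^+ inv_num w *: ('X ^+ beta_stat w : {poly int})
  = \prod_(1 <= k < n) (1 - 'X ^+ k) ^+ (n - k).
Proof.
set D := (\sum_(p < n) p * (n - p))%N.
pose a : 'rV[{poly int}]_n := \row_j 'X ^+ (n - j).
have hX : ('X ^+ D : {poly int}) != 0 by apply: expf_neq0; rewrite polyX_eq0.
apply: (mulfI hX).
have A : 'X ^+ D * \sum_(w : 'S_n) (-1) ^+ inv_num w *: ('X ^+ beta_stat w : {poly int})
     = \det (Vandermonde n a).
  rewrite -det_tr /determinant mulr_sumr; apply: eq_bigr => w _.
  rewrite -scalerAr -exprD addnC beta_eq sign_inv -mul_polyC rmorph_sign.
  congr (_ * _).
  rewrite (eq_bigr (fun i : 'I_n => 'X ^+ ((n - i) * w i)%N)); last first.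
    by move=> i _; rewrite !mxE -exprM.
  by rewrite prodrXr.
have B : \det (Vandermonde n a) =
    \prod_(i < n) \prod_(j < n | (i < j)%N) ('X ^+ (n - j) * (1 - 'X ^+ (j - i))).
  rewrite det_Vandermonde; apply: eq_bigr => i _; apply: eq_bigr => j hij.
  rewrite !mxE mulrBr mulr1 -exprD; congr (_ - _); congr (_ ^+ _).
  have := ltn_ord j; lia.
rewrite A B.
rewrite (eq_bigr (fun i : 'I_n => (\prod_(j < n | (i < j)%N) 'X ^+ (n - j)) *
   \prod_(j < n | (i < j)%N) (1 - 'X ^+ (j - i)) : {poly int})); last first.
  by move=> i _; rewrite big_split.
rewrite big_split /= (triangle (fun k => 1 - 'X ^+ k)); congr (_ * _).
under eq_bigr do rewrite prodrXr.
rewrite prodrXr; congr (_ ^+ _).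
under eq_bigr do rewrite big_mkcond.
rewrite exchange_big /=; apply: eq_bigr => j _.
rewrite (eq_bigr (fun i : 'I_n => ((i < j)%N * (n - j))%N)); last first.
  by move=> i _; case: (i < j)%N; rewrite ?mul1n ?mul0n.
rewrite -big_distrl /= cnt_lt; have := ltn_ord j; lia.
Qed.
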